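(* Let $N\ge2$, $x_1>\cdots>x_N$ real, and $\mathbf A\in\mathbb R^{N\times N}$ with $\mathbf A_{i,n}=|x_i-x_n|$. Then $\mathbf A$ is invertible and $\mathbf A^{-1}=\frac12\mathbf P\mathbf E\mathbf D\mathbf E$, where $$\mathbf P=\begin{pmatrix}\mathbf 0^T & 1\\ I_{N-1} & \mathbf 0\end{pmatrix},\qquad \mathbf E=\begin{pmatrix}\Delta & -\mathbf e\\ -\mathbf e_1^T & -1\end{pmatrix},$$ $\mathbf D\in\mathbb R^{N\times N}$ is diagonal with $\mathbf D_{i,i}=\frac1{x_i-x_{i+1}}$ for $i\in[N-1]$ and $\mathbf D_{N,N}=\frac1{x_1-x_N}$, $\mathbf 0\in\mathbb R^{N-1}$ is the zero vector, $\mathbf e=(0,\dots,0,1)^T\in\mathbb R^{N-1}$ and $\mathbf e_1=(1,0,\dots,0)^T\in\mathbb R^{N-1}$.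
   Context: $\Delta\in\mathbb R^{(N-1)\times(N-1)}$ is the finite difference matrix with $\Delta_{i,i}=1$, $\Delta_{i,i+1}=-1$, and all other entries $0$; $I_{N-1}$ is the identity matrix. *)

(* Defs.v *)
From HB Require Import structures.
From mathcomp Require Import all_boot all_order all_algebra.
Set Implicit Arguments. Unset Strict Implicit. Unset Printing Implicit Defensive.
Import Order.TTheory GRing.Theory Num.Theory.
Local Open Scope ring_scope.

(* Indices are 0-based: the paper's index i (1..N) is our i-1 (0..N-1). *)

Definition distmx (R : realFieldType) (N : nat) (x : 'I_N -> R) : 'M[R]_N :=
  \matrix_(i < N, j < N) `|x i - x j|.

(* P = [ 0^T 1 ; I_{N-1} 0 ] *)
Definition Pmx (R : realFieldType) (N : nat) : 'M[R]_N :=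
  \matrix_(i < N, j < N)
    (if (i : nat) == 0%N then ((j : nat) == N.-1)%:R
     else (((j : nat) == i.-1) && ((j : nat) < N.-1)%N)%:R).

(* E = [ Delta  -e ; -e_1^T  -1 ], Delta_{i,i}=1, Delta_{i,i+1}=-1 *)
Definition Emx (R : realFieldType) (N : nat) : 'M[R]_N :=
  \matrix_(i < N, j < N)
    (if ((i : nat) < N.-1)%N then
       (if ((j : nat) < N.-1)%N
        then ((j : nat) == i)%:R - ((j : nat) == i.+1)%:R
        else - ((i : nat) == N.-2)%:R)
     else
       (if ((j : nat) < N.-1)%N then - ((j : nat) == 0%N)%:R else -1)).

Definition Dmx (R : realFieldType) (n : nat) (x : 'I_n.+2 -> R) : 'M[R]_n.+2 :=
  \matrix_(i < n.+2, j < n.+2)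
    (if i == j then
       (if ((i : nat) < n.+1)%N then (x i - x (inord (i : nat).+1))^-1
        else (x ord0 - x ord_max)^-1)
     else 0).

(* Main.v *)
Require Import Defs.
From HB Require Import structures.
From mathcomp Require Import all_boot all_order all_algebra zify ring lra.
Import Order.TTheory GRing.Theory Num.Theory.
Local Open Scope ring_scope.

Ltac bc b := lazymatch b with true => fail | false => fail
  | context[if _ then _ else _] => fail
  | _ => case: (boolP b) => ? end.
Ltac bcase := repeat match goal with
  | |- context[if ?b then _ else _] => bc b
  | |- context[nat_of_bool ?b] => bc b
  end.

Lemma Pmx_E (R : realFieldType) n (k j : 'I_n.+2) :
  Pmx R n.+2 k j = ((k:nat) == (if (j < n.+1)%N then j.+1 else 0)%N)%:R.
Proof.
rewrite mxE /=.
have := ltn_ord j; have := ltn_ord k => *. bcase => //=; lia.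
Qed.

Lemma Emx_E (R : realFieldType) n (k j : 'I_n.+2) :
  Emx R n.+2 k j =
  ((k:nat) == (if (j < n.+1)%N then (j:nat) else n))%:R * (if (j < n.+1)%N then 1 else -1)
  - ((k:nat) == (if (j < n.+1)%N then (if (j:nat) == 0%N then n.+1 else j.-1) else n.+1))%:R.
Proof.
rewrite mxE /=; have := ltn_ord j; have := ltn_ord k => *; bcase => //= ; try lia; ring.
Qed.
Lemma sum1 (R : comRingType) N (f : 'I_N.+1 -> R) u : (u <= N)%N ->
  \sum_(k < N.+1) f k * ((k:nat) == u)%:R = f (inord u).
Proof.
move=> hu; rewrite (bigD1 (inord u)) //= inordK ?eqxx // mulr1 big1 ?addr0 //.
move=> k hk; case: eqP => e; last by rewrite mulr0.
by move: hk; rewrite -e inord_val eqxx.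
Qed.

Lemma sum2 (R : comRingType) N (f : 'I_N.+1 -> R) u v a : (u <= N)%N -> (v <= N)%N ->
  \sum_(k < N.+1) f k * (((k:nat) == u)%:R * a - ((k:nat) == v)%:R)
  = f (inord u) * a - f (inord v).
Proof.
move=> hu hv.
under eq_bigr => k _ do rewrite mulrBr mulrA.
by rewrite sumrB -mulr_suml sum1 // sum1.
Qed.
Lemma Dmx_E (R : realFieldType) n (x : 'I_n.+2 -> R) (k j : 'I_n.+2) :
  Dmx x k j = ((k:nat) == j)%:R *
    (if (j < n.+1)%N then (x j - x (inord j.+1))^-1
     else (x ord0 - x ord_max)^-1).
Proof.
rewrite mxE; have -> : ((k:nat) == j) = (k == j) by [].
by case: eqP => [->|_]; rewrite ?mul1r ?mul0r.
Qed.

Section Main.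
Variables (R : realFieldType) (n : nat) (x : 'I_n.+2 -> R).
Hypothesis hx : forall i j : 'I_n.+2, (i < j)%N -> x j < x i.
Let y (m : nat) := x (inord m).
Ltac unify_y := repeat match goal with |- context[y ?a] =>
  match goal with |- context[y ?b] =>
   assert_fails (constr_eq a b); replace a with b by lia end end.

Lemma xy (i : 'I_n.+2) : x i = y i.
Proof. by rewrite /y inord_val. Qed.

Lemma ylt a b : (a < b)%N -> (b <= n.+1)%N -> y b < y a.
Proof. move=> hab hb; apply: hx; rewrite !inordK //; lia. Qed.

Lemma absE a b : (a <= n.+1)%N -> (b <= n.+1)%N ->
  `|y a - y b| = if (a <= b)%N then y a - y b else y b - y a.
Proof.
move=> ha hb; case: (ltngtP a b) => h.
- by rewrite ger0_norm // subr_ge0 ltW // ylt.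
- by rewrite ler0_norm ?opprB // subr_le0 ltW // ylt.
- by rewrite h subrr normr0.
Qed.

Lemma C_E (i : 'I_n.+2) m : (m <= n.+1)%N ->
  (distmx x *m Pmx R n.+2) i (inord m) = `|y i - y (if (m < n.+1)%N then m.+1 else 0)|.
Proof.
move=> hm; rewrite mxE.
under eq_bigr => k _ do rewrite Pmx_E inordK // mxE.
rewrite sum1; last by case: ifP => _ //; lia.
by rewrite xy.
Qed.

Lemma F_E (i : 'I_n.+2) m : (m <= n.+1)%N ->
  (distmx x *m Pmx R n.+2 *m Emx R n.+2) i (inord m) =
  if (m < n.+1)%N then (if (i <= m)%N then y m - y m.+1 else y m.+1 - y m)
  else y n.+1 - y 0.
Proof.
move=> hm; rewrite mxE.
under eq_bigr => k _ do rewrite Emx_E inordK //.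
rewrite sum2; first last.
- by case: ifP => _ //; case: ifP => _ //; lia.
- by case: ifP => _ //; lia.
have hi := ltn_ord i.
case: (ltnP m n.+1) => h1.
- rewrite !C_E ?h1 //; last by case: ifP => _ //; lia.
  case: (m =P 0) => [e|e].
  + subst m => /=; rewrite ltnn !absE //; bcase => //=; try lia; unify_y; ring.
    have -> : (m.-1 < n.+1)%N by lia.
    have -> : m.-1.+1 = m by lia.
    rewrite !absE //; try lia; bcase => //=; try lia; unify_y; ring.
- rewrite !C_E // ?ltnn ?ltnSn /= !absE //; bcase => //=; try lia; unify_y; ring.
Qed.


Lemma G_E (i : 'I_n.+2) m : (m <= n.+1)%N ->
  (distmx x *m Pmx R n.+2 *m Emx R n.+2 *m Dmx x) i (inord m) =
  if (m < n.+1)%N then (if (i <= m)%N then 1 else -1) else -1.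
Proof.
move=> hm; rewrite mxE.
under eq_bigr => k _ do rewrite Dmx_E inordK // mulrA.
rewrite -mulr_suml sum1 // F_E // (xy (inord m)) (xy ord0) (xy ord_max) /= inordK //.
case: (ltnP m n.+1) => h1.
- have hne : y m - y m.+1 != 0 by rewrite subr_eq0 gt_eqF // ylt.
  case: leqP => _; first by rewrite mulfV.
  by rewrite -opprB mulNr mulfV.
- have hne : y 0 - y n.+1 != 0 by rewrite subr_eq0 gt_eqF // ylt.
  by rewrite -opprB mulNr mulfV.
Qed.

Lemma H_E (i j : 'I_n.+2) :
  (distmx x *m Pmx R n.+2 *m Emx R n.+2 *m Dmx x *m Emx R n.+2) i j =
  ((i:nat) == j)%:R * 2.
Proof.
rewrite mxE.
under eq_bigr => k _ do rewrite Emx_E.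
have hj := ltn_ord j; have hi := ltn_ord i.
rewrite sum2; [| by bcase => //; lia | by bcase => //; lia ].
rewrite G_E; last by bcase => //; lia.
rewrite G_E; last by bcase => //; lia.
bcase => //=; try lia; ring.
Qed.

End Main.

Theorem lemma22 (R : realFieldType) (n : nat) (x : 'I_n.+2 -> R)
  (hx : forall i j : 'I_n.+2, (i < j)%N -> x j < x i) :
  distmx x \in unitmx /\
  invmx (distmx x) = 2^-1 *: (Pmx R n.+2 *m Emx R n.+2 *m Dmx x *m Emx R n.+2).
Proof.
have key : distmx x *m (2^-1 *: (Pmx R n.+2 *m Emx R n.+2 *m Dmx x *m Emx R n.+2)) = 1%:M.
  apply/matrixP => i j.
  rewrite -scalemxAr !mulmxA [LHS]mxE H_E // mxE.
  have h2 : (2 : R) != 0 by rewrite pnatr_eq0.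
  by rewrite mulrC -mulrA mulfV // mulr1.
have hA := (mulmx1_unit key).1.
split => //.
by rewrite -[RHS]mul1mx -(mulVmx hA) -(mulmxA (invmx _)) key mulmx1.
Qed.
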